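(* Let $p$ be an odd prime and let $(P_n)_{n\ge0}$ be the Catalan-Larcombe-French numbers. Then for all integers $n$ with $0\le n\le p-1$, $$128^nP_{p-1-n}\equiv(-1)^{\frac{p-1}{2}}P_n\pmod{p}.$$ In particular, for $0\le n\le p-1$, $p\mid P_n$ if and only if $p\mid P_{p-1-n}$.
   Context: The Catalan-Larcombe-French numbers are defined by $P_0=1$, $P_1=8$ and, for $n\ge 2$, $n^2P_n-8(3n^2-3n+1)P_{n-1}+128(n-1)^2P_{n-2}=0$. *)

(* Defs.v *)
From mathcomp Require Import all_boot all_order all_algebra.
Set Implicit Arguments. Unset Strict Implicit. Unset Printing Implicit Defensive.
Import Order.TTheory GRing.Theory Num.Theory.
Local Open Scope ring_scope.

(* Catalan-Larcombe-French numbers, computed in rat from the defining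
   recurrence: P_0 = 1, P_1 = 8 and, for n >= 2,
   n^2 P_n = 8(3n^2-3n+1) P_{n-1} - 128 (n-1)^2 P_{n-2}.
   CLF_pair n = (P_n, P_{n+1}). *)
Fixpoint CLF_pair (n : nat) : rat * rat :=
  match n with
  | 0%N => (1, 8)
  | m.+1 =>
      let: (a, b) := CLF_pair m in
      let k : rat := (m.+2)%:R in
      (b, (8 * (3 * k ^+ 2 - 3 * k + 1) * b - 128 * (k - 1) ^+ 2 * a) / k ^+ 2)
  end.

Definition CLF (n : nat) : rat := (CLF_pair n).1.

(* congruence of rationals modulo an integer m (meaningful for integer values) *)
Definition rat_cong (m : nat) (x y : rat) : Prop :=
  exists k : int, x - y = m%:R * k%:~R.

(* Main.v *)
Require Import Defs.
From mathcomp Require Import all_boot all_order all_algebra.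
From mathcomp Require Import all_field.
From mathcomp Require Import ring lra zify.
From Stdlib Require Import Lia.
Import Order.TTheory GRing.Theory Num.Theory.
Local Open Scope ring_scope.
Set Implicit Arguments. Unset Strict Implicit. Unset Printing Implicit Defensive.

Lemma bin_id (m j : nat) :
  ((m.+2)%:R ^+ 2 * 'C(m.+2, j)%:R
   - (3 * (m.+2)%:R ^+ 2 - 3 * (m.+2)%:R + 1) * 'C(m.+1, j)%:R
   + 2 * (m.+1)%:R ^+ 2 * 'C(m, j)%:R
   + (j.+1)%:R ^+ 2 * 'C(m.+1, j.+1)%:R
   - j%:R ^+ 2 * 'C(m.+1, j.-1)%:R : rat) = 0.
Proof.
case: (leqP j m.+1) => hj.
- have [t ht] : exists t, m.+1 = (j + t)%N by exists (m.+1 - j)%N; rewrite subnKC.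
  set X := 'C(m.+1, j).
  have ha : ((t.+1 * 'C(m.+2, j))%:R : rat) = (m.+2 * X)%:R.
    by rewrite /X -[m.+1]/((m.+2).-1) mul_bin_down; congr (_ * _)%N%:R; lia.
  have hb : ((m.+1 * 'C(m, j))%:R : rat) = (t * X)%:R.
    by rewrite /X -[m]/((m.+1).-1) mul_bin_down; congr (_ * _)%N%:R; lia.
  have hc : ((j.+1 * 'C(m.+1, j.+1))%:R : rat) = (t * X)%:R.
    by rewrite mul_bin_left; congr (_ * _)%N%:R; lia.
  have hd : ((j * j * 'C(m.+1, j.-1) * t.+1)%:R : rat) = (j * j * j * X)%:R.
    rewrite /X; clear -ht hj; case: j ht hj => [|i] ht hj; first by rewrite !mul0n.
    have e : (m.+1 - i = t.+1)%N by lia.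
    rewrite /= -[(i.+1 * i.+1 * i.+1 * _)%N in RHS]mulnA mul_bin_left e; congr _%:R; nia.
  rewrite !natrM in ha hb hc hd.
  apply: (mulIf (x := ((t.+1)%:R * (m.+1)%:R : rat))).
    by rewrite mulf_neq0 // pnatr_eq0.
  rewrite mul0r.
  have e1 : (m.+2)%:R = ((j + t).+1)%:R :> rat by rewrite -ht.
  have e2 : (m.+1)%:R = (j + t)%:R :> rat by rewrite -ht.
  transitivity ((m.+2)%:R ^+ 2 * ((t.+1)%:R * 'C(m.+2, j)%:R) * (m.+1)%:R
   - (3 * (m.+2)%:R ^+ 2 - 3 * (m.+2)%:R + 1) * X%:R * (t.+1)%:R * (m.+1)%:R
   + 2 * (m.+1)%:R * ((m.+1)%:R * 'C(m, j)%:R) * (t.+1)%:R * (m.+1)%:R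
   + (j.+1)%:R * ((j.+1)%:R * 'C(m.+1, j.+1)%:R) * (t.+1)%:R * (m.+1)%:R
   - (j%:R * j%:R * 'C(m.+1, j.-1)%:R * (t.+1)%:R) * (m.+1)%:R : rat).
    rewrite /X; ring.
  rewrite ha hb hc hd e1 e2 -[t.+1]addn1 -[j.+1]addn1 -[(j + t).+1]addn1 !natrD.
  ring.
- case: (ltngtP j m.+2) => hj2; first lia.
  + rewrite !bin_small //; try lia. ring.
  + rewrite hj2 binn /= binn !bin_small //.
    by rewrite !mulr0 !mulr1 subr0 !addr0 subrr.
Qed.
Definition Fn (n k : nat) : nat := ('C(n, k.*2) * 'C(k.*2, k) ^ 2 * 4 ^ (n - k.*2))%N.
Definition bn (n : nat) : nat := (\sum_(k < n.+1) Fn n k)%N.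
Definition Pz (n : nat) : nat := (2 ^ n * bn n)%N.

Definition Fq (n k : nat) : rat :=
  'C(n, k.*2)%:R * 'C(k.*2, k)%:R ^+ 2 * (4 ^+ n / 16 ^+ k).
Definition Gq (n k : nat) : rat :=
  - 4 * k%:R ^+ 2 * 'C(k.*2, k)%:R ^+ 2 * 'C(n.-1, (k.*2).-1)%:R * (4 ^+ n / 16 ^+ k).

Lemma Fn_Fq n k : (Fn n k)%:R = Fq n k.
Proof.
rewrite /Fn /Fq !natrM !natrX.
case: (leqP k.*2 n) => h.
  congr (_ * _); apply: (mulIf (x := 16 ^+ k)); first by rewrite expf_neq0.
  rewrite divfK ?expf_neq0 //.
  have -> : (16 : rat) ^+ k = 4 ^+ k.*2 by rewrite -mul2n exprM.
  by rewrite -exprD subnK.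
by rewrite bin_small // !mul0r.
Qed.

Lemma cbin k : ('C(k.+1.*2, k.+1) * k.+1 = 2 * (k.*2.+1) * 'C(k.*2, k))%N.
Proof.
rewrite doubleS binS.
have -> : 'C(k.*2.+1, k) = 'C(k.*2.+1, k.+1).
  by rewrite -bin_sub; [congr 'C(_, _); rewrite -addnn; lia | lia].
move: (mul_bin_diag (k.*2.+1) k) => /= e; nia.
Qed.

Lemma cbinq k : ('C(k.+1.*2, k.+1)%:R : rat) = 2 * (k.*2.+1)%:R * 'C(k.*2, k)%:R / k.+1%:R.
Proof.
apply: (mulIf (x := k.+1%:R)); first by rewrite pnatr_eq0.
by rewrite divfK ?pnatr_eq0 // -!natrM cbin.
Qed.

Lemma point (m k : nat) :
  (m.+2)%:R ^+ 2 * Fq m.+2 k - 4 * (3 * (m.+2)%:R ^+ 2 - 3 * (m.+2)%:R + 1) * Fq m.+1 k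
  + 32 * (m.+1)%:R ^+ 2 * Fq m k = Gq m.+2 k.+1 - Gq m.+2 k.
Proof.
have h := bin_id m k.*2.
rewrite /Fq /Gq cbinq /=.
have e1 : (4 : rat) ^+ m.+2 = 16 * 4 ^+ m by rewrite !exprS mulrA.
have e2 : (4 : rat) ^+ m.+1 = 4 * 4 ^+ m by rewrite !exprS.
have e3 : (16 : rat) ^+ k.+1 = 16 * 16 ^+ k by rewrite !exprS.
rewrite e1 e2 e3.
have hk : (16 : rat) ^+ k != 0 by rewrite expf_neq0.
move: h; rewrite -!muln2 => h.
set A := ('C(k * 2, k))%:R : rat.
apply/eqP; rewrite -subr_eq0; apply/eqP.
transitivity (16 * (4 ^+ m / 16 ^+ k) * A ^+ 2 *
  ((m.+2)%:R ^+ 2 * 'C(m.+2, k * 2)%:R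
   - (3 * (m.+2)%:R ^+ 2 - 3 * (m.+2)%:R + 1) * 'C(m.+1, k * 2)%:R
   + 2 * (m.+1)%:R ^+ 2 * 'C(m, k * 2)%:R
   + ((k * 2).+1)%:R ^+ 2 * 'C(m.+1, (k * 2).+1)%:R
   - (k * 2)%:R ^+ 2 * 'C(m.+1, (k * 2).-1)%:R)).
  by field; rewrite hk /= addrC natr1 pnatr_eq0.
by rewrite [X in _ * X](_ : _ = 0) ?mulr0 //; exact: h.
Qed.

Lemma bn_sum n d : (bn n)%:R = \sum_(k < n.+1 + d) Fq n k.
Proof.
elim: d => [|d IH].
  by rewrite addn0 /bn natr_sum; apply: eq_bigr => k _; rewrite Fn_Fq.
rewrite addnS big_ord_recr /= -IH /Fq bin_small; first by rewrite !mul0r addr0.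
rewrite -addnn; apply/ssrnat.ltP; lia.
Qed.

Lemma brec m : (m.+2)%:R ^+ 2 * (bn m.+2)%:R
  - 4 * (3 * (m.+2)%:R ^+ 2 - 3 * (m.+2)%:R + 1) * (bn m.+1)%:R
  + 32 * (m.+1)%:R ^+ 2 * (bn m)%:R = 0 :> rat.
Proof.
rewrite (bn_sum m.+2 0) (bn_sum m.+1 1) (bn_sum m 2) !addn0 !addn1 !addn2.
rewrite !mulr_sumr -sumrB -big_split /=.
rewrite (eq_bigr (fun k : 'I_m.+3 => Gq m.+2 k.+1 - Gq m.+2 k)); last by move=> k _; exact: point.
rewrite -(big_mkord xpredT (fun k => Gq m.+2 k.+1 - Gq m.+2 k)) telescope_sumr //.
rewrite /Gq /= (@bin_small m.+1); first by ring.
rewrite -addnn; apply/ssrnat.ltP; lia.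
Qed.

Lemma Pz0 : Pz 0 = 1%N.
Proof. by rewrite /Pz /bn big_ord_recr big_ord0 /Fn. Qed.
Lemma Pz1 : Pz 1 = 8%N.
Proof. by rewrite /Pz /bn !big_ord_recr big_ord0 /Fn. Qed.

Lemma Pzrec n : (Pz n.+2)%:R = (8 * (3 * (n.+2)%:R ^+ 2 - 3 * (n.+2)%:R + 1) * (Pz n.+1)%:R
   - 128 * ((n.+2)%:R - 1) ^+ 2 * (Pz n)%:R) / (n.+2)%:R ^+ 2 :> rat.
Proof.
have hk : ((n.+2)%:R : rat) ^+ 2 != 0 by rewrite expf_neq0 // pnatr_eq0.
apply: (mulIf hk); rewrite divfK //.
rewrite /Pz !natrM !natrX.
apply/eqP; rewrite -subr_eq0; apply/eqP.
transitivity (2 ^+ n * 4 * ((n.+2)%:R ^+ 2 * (bn n.+2)%:R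
  - 4 * (3 * (n.+2)%:R ^+ 2 - 3 * (n.+2)%:R + 1) * (bn n.+1)%:R
  + 32 * (n.+1)%:R ^+ 2 * (bn n)%:R : rat)).
  rewrite !exprS; ring.
by rewrite [X in _ * X](_ : _ = 0) ?mulr0 //; exact: brec.
Qed.

Lemma CLF_pairE n : CLF_pair n = ((Pz n)%:R, (Pz n.+1)%:R).
Proof.
elim: n => [|n IH]; first by rewrite /= Pz0 Pz1.
by rewrite /= IH -Pzrec.
Qed.

Lemma CLFE n : CLF n = (Pz n)%:R.
Proof. by rewrite /CLF CLF_pairE. Qed.

Lemma nat_of_rat (k l a b c : nat) : (k%:R : rat) = l%:R + 1 -> (k%:R : rat) != 0 ->
  (a%:R : rat) = (8 * (3 * k%:R ^+ 2 - 3 * k%:R + 1) * b%:R - 128 * (k%:R - 1) ^+ 2 * c%:R) / k%:R ^+ 2 ->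
  (k ^ 2 * a + 128 * l ^ 2 * c = 8 * (3 * k * l + 1) * b)%N.
Proof.
move=> kl hk h.
apply/eqP; rewrite -(eqr_nat rat) !natrD !natrM !natrD !natrM h.
apply/eqP; rewrite kl in hk *; field; exact: hk.
Qed.

Lemma PzrecN n : ((n.+2) ^ 2 * Pz n.+2 + 128 * (n.+1) ^ 2 * Pz n
   = 8 * (3 * n.+2 * n.+1 + 1) * Pz n.+1)%N.
Proof.
apply: nat_of_rat; last exact: Pzrec.
  by rewrite -natr1.
by rewrite pnatr_eq0.
Qed.

Lemma cast_rec (R : pzRingType) (k l a b c : nat) :
  (k ^ 2 * a + 128 * l ^ 2 * c = 8 * (3 * k * l + 1) * b)%N ->
  (k%:R ^+ 2 * a%:R + 128 * l%:R ^+ 2 * c%:R = 8 * (3 * k%:R * l%:R + 1) * b%:R :> R).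
Proof.
move/(congr1 (fun z => z%:R : R)); rewrite !natrD !natrM !natrD !natrM !expr2 => ->.
by rewrite mulr1n.
Qed.

Section ModP.
Variable p : nat.
Hypothesis hp : prime p.
Hypothesis hodd : odd p.

Local Notation F := 'F_p.
Definition x (k : nat) : F := (Pz k)%:R.

Lemma p0 : (p%:R : F) = 0.
Proof. exact: pchar_Fp_0. Qed.

Lemma natF0 k : ((k%:R : F) == 0) = (p %| k)%N.
Proof. by rewrite (dvdn_pcharf (pchar_Fp hp)). Qed.

Lemma natF_neq0 k : (0 < k < p)%N -> (k%:R : F) != 0.
Proof.
case/andP=> h1 h2; rewrite natF0; apply/negP => /(dvdn_leq h1); rewrite leqNgt h2.
by [].
Qed.

Lemma p_gt2 : (2 < p)%N.
Proof.
have := prime_gt1 hp; rewrite leq_eqVlt => /orP [/eqP h|//].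
by move: hodd; rewrite -h.
Qed.

Lemma n128 : (128 : F) != 0.
Proof.
rewrite (_ : 128 = (2 ^ 7)%N%:R) // natF0 Euclid_dvdX // andbT.
apply/negP => /(dvdn_leq (isT : 0 < 2)%N); rewrite leqNgt p_gt2 //.
Qed.

Lemma RF n : (n.+2)%:R ^+ 2 * x n.+2 + 128 * (n.+1)%:R ^+ 2 * x n
   = 8 * (3 * (n.+2)%:R * (n.+1)%:R + 1) * x n.+1.
Proof.
rewrite /x; apply: cast_rec; exact: PzrecN.
Qed.

Lemma natF_neg a b : (a + b = p)%N -> (a%:R : F) = - b%:R.
Proof. by move=> h; apply/eqP; rewrite -addr_eq0 -natrD h p0. Qed.

Lemma iso1 (a b c d : F) : a + d * b = c -> d != 0 -> b = (c - a) / d.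
Proof. by move=> <- hd; field. Qed.

Lemma iso2 (b c d : F) : d * b = c -> d != 0 -> b = c / d.
Proof. by move=> <- hd; field. Qed.

Lemma iso3 (a b c d : F) : d * b + a = c -> d != 0 -> b = (c - a) / d.
Proof. by move=> <- hd; field. Qed.

Definition c0 := x p.-1.
Definition y (i : nat) : F := 128 ^+ i * x (p.-1 - i).

Lemma x0 : x 0 = 1. Proof. by rewrite /x Pz0. Qed.
Lemma x1 : x 1 = 8. Proof. by rewrite /x Pz1. Qed.

Lemma y_base : y 0 = c0 * x 0 /\ y 1 = c0 * x 1.
Proof.
split; first by rewrite /y /c0 x0 subn0 expr0 mul1r mulr1.
have h2 := p_gt2.
have R := RF p.-2.
have e2 : (p.-2).+2 = p by lia.
have e1 : (p.-2).+1 = p.-1 by lia.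
rewrite e2 p0 e1 (natF_neg (a := p.-1) (b := 1)) in R; last lia.
rewrite /y /c0 x1 expr1 (_ : (p.-1 - 1)%N = p.-2); last lia.
move: R; rewrite expr0n /= mul0r add0r.
move=> R; transitivity (128 * (-1) ^+ 2 * x p.-2); first ring.
rewrite R; ring.
Qed.

Lemma y_step i : (i.+2 <= p.-1)%N -> y i = c0 * x i -> y i.+1 = c0 * x i.+1 ->
  y i.+2 = c0 * x i.+2.
Proof.
move=> hi E3 E4.
have h2 := p_gt2.
set n := (p.-1 - i.+2)%N.
have R := RF n.
have en2 : n.+2 = (p.-1 - i)%N by rewrite /n; lia.
have en1 : n.+1 = (p.-1 - i.+1)%N by rewrite /n; lia.
rewrite (natF_neg (a := n.+2) (b := i.+1)) in R; last by rewrite /n; lia.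
rewrite (natF_neg (a := n.+1) (b := i.+2)) in R; last by rewrite /n; lia.
rewrite en2 en1 in R.
have Ri := RF i.
have hv : ((i.+2)%:R : F) != 0 by apply: natF_neq0; apply/andP; split => //; lia.
have h128 := n128.
have hA : (128 : F) ^+ i != 0 by rewrite expf_neq0.
move: E3 E4; rewrite /y => E3 E4.
have hX2 := iso2 E3 hA.
have hX1 := iso2 E4 (expf_neq0 _ h128).
have hd : 128 * (- (i.+2)%:R) ^+ 2 != 0 :> F by rewrite mulf_neq0 // expf_neq0 // oppr_eq0.
have hX0 := iso1 R hd.
have hd2 : ((i.+2)%:R : F) ^+ 2 != 0 by rewrite expf_neq0.
have hxi := iso3 Ri hd2.
rewrite /y hX0 hX1 hX2 hxi !exprS.
have hv' : (2 + i%:R : F) != 0 by rewrite (_ : 2 + i%:R = (i.+2)%:R :> F) //; ring.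
field; by rewrite hv' oppr_eq0 hv' h128 hA.
Qed.

Lemma y_pair i : (i.+1 <= p.-1)%N -> y i = c0 * x i /\ y i.+1 = c0 * x i.+1.
Proof.
elim: i => [|i IH] hi; first exact: y_base.
have [E3 E4] := IH (ltnW hi).
by split => //; apply: y_step.
Qed.

Lemma y_all n : (n <= p.-1)%N -> y n = c0 * x n.
Proof.
case: n => [|i] hi; first by case: y_base.
by case: (y_pair hi).
Qed.

Lemma binm1 j : (j < p)%N -> ('C(p.-1, j)%:R : F) = (-1) ^+ j.
Proof.
elim: j => [|j IH] hj; first by rewrite bin0 expr0.
have h1 : (p.-1).+1 = p by rewrite prednK // prime_gt0.
have := prime_dvd_bin (k := j.+1) hp; rewrite hj andTb => /(_ isT).
rewrite -natF0 -h1 binS natrD IH; last exact: ltnW.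
rewrite addr_eq0 => /eqP ->; by rewrite exprS mulN1r.
Qed.

Lemma hh : (p./2 + p./2).+1 = p.
Proof. by rewrite addnn -[RHS]odd_double_half hodd add1n. Qed.

Lemma cbinF k : (k < p)%N -> ('C(k.*2, k)%:R : F) = (-4) ^+ k * 'C(p./2, k)%:R.
Proof.
elim: k => [|k IH] hk; first by rewrite expr0 mul1r !bin0.
have hk1 : ((k.+1)%:R : F) != 0 by apply: natF_neq0; rewrite hk.
apply: (mulfI hk1).
rewrite -natrM mulnC cbin !natrM IH; last exact: ltnW.
have hb := mul_bin_left (p./2) k.
case: (leqP k (p./2)) => hkh.
  rewrite [in RHS]mulrCA -[_%:R * _%:R in RHS]natrM hb natrM natrB // exprS.
  have e : ((p./2)%:R + (p./2)%:R + 1 : F) = 0 by rewrite -natrD natr1 hh p0.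
  apply/eqP; rewrite -subr_eq0; apply/eqP.
  transitivity ((-4) ^+ k * 'C(p./2, k)%:R * 2 * ((p./2)%:R + (p./2)%:R + 1) : F).
    rewrite -[(k.*2)%N]muln2; ring.
  by rewrite e mulr0.
rewrite bin_small // bin_small ?mulr0 //; lia.
Qed.

Lemma sqN1k k : ((-1 : F) ^+ k) ^+ 2 = 1.
Proof. by rewrite exprAC expr2 mulN1r opprK expr1n. Qed.

Lemma Fn_mod k : (k < p)%N -> ((Fn p.-1 k)%:R : F) = 4 ^+ p.-1 * 'C(p./2, k)%:R ^+ 2.
Proof.
move=> hk.
have h2 := p_gt2.
have e1 := hh.
rewrite /Fn.
case: (leqP k.*2 p.-1) => hk2.
  rewrite !natrM !natrX binm1; last lia.
  rewrite cbinF // -mul2n exprM expr2 mulN1r opprK expr1n mul1r.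
  rewrite (_ : (-4 : F) = -1 * 4); last by rewrite mulN1r.
  rewrite exprMn.
  transitivity (((-1 : F) ^+ k) ^+ 2 * ((4 : F) ^+ k) ^+ 2 * 'C(p./2, k)%:R ^+ 2 * 4 ^+ (p.-1 - 2 * k)); first ring.
  have e : (4 : F) ^+ p.-1 = 4 ^+ (p.-1 - 2 * k) * 4 ^+ (2 * k) by rewrite -exprD subnK // mul2n.
  rewrite sqN1k mul1r -exprM mulnC e; ring.
rewrite bin_small // (bin_small (n := p./2)); last lia.
by rewrite !mul0n expr0n /= mulr0.
Qed.

Lemma sum_sq : (\sum_(k < p) 'C(p./2, k) ^ 2)%N = 'C(p.-1, p./2).
Proof.
have e := hh.
move: e; set h := p./2 => e; clearbody h.
rewrite -e /= -addSn big_split_ord /=.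
rewrite [X in (_ + X)%N]big1 ?addn0; last first.
  by move=> i _; rewrite bin_small //= ltnS leq_addr.
rewrite -[in RHS]binomial.Vandermonde; apply: eq_bigr => i _.
by rewrite bin_sub ?mulnn //; exact: ltn_ord i.
Qed.

Lemma fermat8 : (8 : F) ^+ p.-1 = 1.
Proof.
have h8 : (8 : F) != 0.
  rewrite (_ : 8 = (2 ^ 3)%N%:R) // natF0 Euclid_dvdX // andbT.
  apply/negP => /(dvdn_leq (isT : 0 < 2)%N); rewrite leqNgt p_gt2 //.
apply: (mulIf h8); rewrite mul1r -exprSr prednK ?prime_gt0 //.
by have := expf_card (8 : F); rewrite card_Fp.
Qed.

Lemma c0E : c0 = (-1) ^+ (p./2).
Proof.
have h2 := p_gt2.
rewrite /c0 /x /Pz /bn natrM natrX natr_sum prednK ?prime_gt0 //.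
rewrite (eq_bigr (fun k : 'I_p => 4 ^+ p.-1 * 'C(p./2, k)%:R ^+ 2)); last first.
  by move=> k _; apply: Fn_mod.
rewrite -mulr_sumr.
have -> : \sum_(i < p) ('C(p./2, i)%:R : F) ^+ 2 = ('C(p.-1, p./2))%:R.
  by rewrite -sum_sq natr_sum; apply: eq_bigr => i _; rewrite natrX.
rewrite binm1; last by rewrite -[X in (_ < X)%N]hh ltnS leq_addr.
by rewrite mulrA -exprMn (_ : (2 : F) * 4 = 8) ?fermat8 ?mul1r //; ring.
Qed.
End ModP.

Lemma intF0 (p : nat) (hp : prime p) (z : int) : (z%:~R : 'F_p) = 0 -> (p %| z)%Z.
Proof.
rewrite dvdzE /=; case: z => k.
  by move=> /eqP; rewrite -pmulrn natF0.
by rewrite NegzE mulrNz -pmulrn => /eqP; rewrite oppr_eq0 natF0.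
Qed.

Lemma zcast (R : pzRingType) (a b h : nat) :
  ((a%:Z - (-1) ^+ h * b%:Z)%:~R : R) = a%:R - (-1) ^+ h * b%:R.
Proof.
by rewrite rmorphB rmorphM /= rmorphXn rmorphN rmorph1 /= -!pmulrn.
Qed.

Lemma dvd_iff (p N : nat) : (exists k : int, (N%:R : rat) = p%:R * k%:~R) <-> (p %| N)%N.
Proof.
split.
  case=> k hk.
  have : (N%:Z)%:~R = ((p%:Z * k)%:~R : rat) by rewrite intrM -!pmulrn.
  move/intr_inj => e.
  have : (p%:Z %| N%:Z)%Z by rewrite e dvdz_mulr.
  by rewrite dvdzE.
move=> hd; exists (N %/ p)%:Z.
by rewrite -pmulrn -natrM mulnC divnK.
Qed.

Unset Implicit Arguments.

Theorem corollary5 (p : nat) (hp : prime p) (hodd : odd p) :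
  forall n : nat, (n <= p.-1)%N ->
    rat_cong p (128 ^+ n * CLF (p.-1 - n)) ((-1) ^+ (p.-1./2) * CLF n)
    /\ ((exists k : int, CLF n = p%:R * k%:~R) <->
        (exists k : int, CLF (p.-1 - n) = p%:R * k%:~R)).
Proof.
move=> n hn.
have eh : p.-1./2 = p./2.
  have e := hh hodd.
  by rewrite -[p in LHS]e /= addnn doubleK.
set m := (p.-1 - n)%N.
have key : ((128 ^ n * Pz m)%N%:R : 'F_p) = (-1) ^+ (p.-1./2) * (Pz n)%:R.
  have := y_all hp hodd hn; rewrite /y c0E // eh natrM natrX.
  by [].
split.
  set z : int := ((128 ^ n * Pz m)%N%:Z - (-1) ^+ (p.-1./2) * (Pz n)%:Z).
  have hz : (p %| z)%Z.
    apply: (intF0 hp); rewrite /z zcast key; exact: subrr.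
  exists (z %/ p)%Z.
  rewrite /rat_cong !CLFE.
  rewrite (_ : 128 ^+ n * (Pz m)%:R = ((128 ^ n * Pz m)%N)%:R :> rat); last by rewrite natrM natrX.
  by rewrite -(zcast rat) -/z -{1}(divzK hz) intrM mulrC -pmulrn.
rewrite !CLFE !dvd_iff -!natF0 //.
have h128 : (128 : 'F_p) ^+ n != 0 by rewrite expf_neq0 // n128.
have hs : ((-1) ^+ (p.-1./2) : 'F_p) != 0 by rewrite signr_eq0.
move: key; rewrite natrM natrX => key.
split.
  move=> /eqP h0; move: key; rewrite h0 mulr0 => /eqP; rewrite mulf_eq0 (negPf h128) /=.
  by move=> /eqP ->.
move=> /eqP h0; move: key; rewrite -/m h0 mulr0 => /esym/eqP; rewrite mulf_eq0 (negPf hs) /=.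
by move=> /eqP ->.
Qed.
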